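(* Let $p$ be a prime and $n, k$ positive integers, $d = \gcd(n,k)$, and suppose $p \nmid \frac{k}{d}$. Let $L(X) = \sum_{i=0}^t \alpha_i X^{p^i}$, $\alpha_i \in \mathbb{F}_p$, be a $p$-linearized polynomial without multiple roots, and let $L'$ be a $p$-linearized polynomial over $\mathbb{F}_p$ with $X - X^{p^k} = L \circ L'(X)$. Let $a \in \mathbb{F}_{p^n}$ and let $\delta$ be any element of $\mathbb{F}_{p^{2n}}$ with $S_n^{2n}(\delta) = 1$. Then the equation $L(X) = a$ has a solution in $\mathbb{F}_{p^n}$ if and only if $L' \circ T_d^n(a) = 0$. Moreover, $$x_0 = \frac{d}{k} \cdot L' \circ T_k^{[n,k]}(\delta \cdot a)$$ is a solution of $L(X) = a$, and it belongs to $\mathbb{F}_{p^n}$ under the condition $L' \circ T_d^n(a) = 0$.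
   Context: For positive integers $l \mid m$ define $T_l^m(X) = \sum_{i=0}^{m/l - 1} X^{p^{li}}$ and $S_l^m(X) = \sum_{i=0}^{m/l-1} (-1)^i X^{p^{li}}$; in particular $S_n^{2n}(X) = X - X^{p^n}$. $[n,k]$ denotes the least common multiple of $n$ and $k$. Since $p \nmid k/d$, $\frac{d}{k}$ denotes the inverse of $\frac{k}{d}$ in $\mathbb{F}_p$. $\circ$ denotes composition. *)

(* Defs.v *)
From HB Require Import structures.
From mathcomp Require Import all_boot all_order all_algebra.
From mathcomp Require Import all_field.
Set Implicit Arguments. Unset Strict Implicit. Unset Printing Implicit Defensive.
Import GRing.Theory.
Local Open Scope ring_scope.

Definition linp (F : fieldType) (p : nat) (c : seq F) : {poly F} :=
  \sum_(i < size c) c`_i *: 'X^(p ^ i).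

Definition Tr (F : fieldType) (p l m : nat) (x : F) : F :=
  \sum_(i < m %/ l) x ^+ (p ^ (l * i)).

Definition Sr (F : fieldType) (p l m : nat) (x : F) : F :=
  \sum_(i < m %/ l) (-1) ^+ i * x ^+ (p ^ (l * i)).

Definition in_Fp (F : fieldType) (p : nat) (x : F) : bool := x ^+ p == x.

(* Main.v *)
Require Import Defs.
From HB Require Import structures.
From mathcomp Require Import all_boot all_order all_algebra.
From mathcomp Require Import all_field.
From mathcomp Require Import ring.
From mathcomp Require Import zify.
Set Implicit Arguments. Unset Strict Implicit.
Import GRing.Theory.
Local Open Scope ring_scope.

Section Lin.
Variables (F : fieldType) (p : nat).
Hypothesis hp : p \in [pchar F].

Lemma frobD j (x y : F) : (x + y) ^+ (p ^ j) = x ^+ (p ^ j) + y ^+ (p ^ j).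
Proof.
elim: j => [|j IH]; first by rewrite !expn0 !expr1.
by rewrite expnSr !exprM IH -!(pFrobenius_autE hp) rmorphD.
Qed.

Lemma frobB j (x y : F) : (x - y) ^+ (p ^ j) = x ^+ (p ^ j) - y ^+ (p ^ j).
Proof.
elim: j => [|j IH]; first by rewrite !expn0 !expr1.
by rewrite expnSr !exprM IH -!(pFrobenius_autE hp) rmorphB.
Qed.

Lemma frob0 j : (0 : F) ^+ (p ^ j) = 0.
Proof. by rewrite expr0n expn_eq0 eqn0Ngt (prime_gt0 (pcharf_prime hp)).
Qed.

Lemma frob_sum j N (G : 'I_N -> F) :
  (\sum_(i < N) G i) ^+ (p ^ j) = \sum_(i < N) G i ^+ (p ^ j).
Proof. exact: (big_morph (fun x : F => x ^+ (p ^ j)) (frobD j) (frob0 j)). Qed.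

Lemma frob_fix j (c : F) : c ^+ p = c -> c ^+ (p ^ j) = c.
Proof.
move=> hc; elim: j => [|j IH]; first by rewrite expn0 expr1.
by rewrite expnSr exprM IH hc.
Qed.

Lemma nat_fix (m : nat) : (m%:R : F) ^+ p = m%:R.
Proof. by rewrite -(pFrobenius_autE hp) pFrobenius_aut_nat. Qed.

Lemma linpE (c : seq F) x :
  (linp p c).[x] = \sum_(i < size c) c`_i * x ^+ (p ^ i).
Proof. by rewrite /linp horner_sum; apply: eq_bigr => i _; rewrite hornerZ hornerXn. Qed.

Lemma inFp_nth (c : seq F) i : all (in_Fp p) c -> c`_i ^+ p = c`_i.
Proof.
move=> /allP hc; have [lt|ge] := ltnP i (size c).
  by apply/eqP; apply: hc; rewrite mem_nth.
by rewrite nth_default // expr0n eqn0Ngt (prime_gt0 (pcharf_prime hp)).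
Qed.

Lemma linp_frob (c : seq F) x j : all (in_Fp p) c ->
  ((linp p c).[x]) ^+ (p ^ j) = (linp p c).[x ^+ (p ^ j)].
Proof.
move=> hc; rewrite !linpE frob_sum; apply: eq_bigr => i _.
by rewrite exprMn frob_fix ?inFp_nth // exprAC.
Qed.

Lemma linpD (c : seq F) x y : (linp p c).[x + y] = (linp p c).[x] + (linp p c).[y].
Proof. by rewrite !linpE -big_split; apply: eq_bigr => i _; rewrite frobD mulrDr. Qed.

Lemma linpB (c : seq F) x y : (linp p c).[x - y] = (linp p c).[x] - (linp p c).[y].
Proof. by rewrite !linpE -sumrB; apply: eq_bigr => i _; rewrite frobB mulrBr. Qed.

Lemma linp0 (c : seq F) : (linp p c).[0] = 0.
Proof. by rewrite linpE big1 // => i _; rewrite frob0 mulr0. Qed.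

Lemma linp_sum (c : seq F) N (G : 'I_N -> F) :
  (linp p c).[\sum_(i < N) G i] = \sum_(i < N) (linp p c).[G i].
Proof. exact: (big_morph (fun x => (linp p c).[x]) (linpD c) (linp0 c)). Qed.

Lemma linp_scal (c : seq F) c0 x : c0 ^+ p = c0 ->
  (linp p c).[c0 * x] = c0 * (linp p c).[x].
Proof.
move=> h; rewrite !linpE mulr_sumr; apply: eq_bigr => i _.
by rewrite exprMn frob_fix // mulrCA.
Qed.

Lemma linp_comm (c c' : seq F) y : all (in_Fp p) c -> all (in_Fp p) c' ->
  (linp p c).[(linp p c').[y]] = (linp p c').[(linp p c).[y]].
Proof.
move=> hc hc'.
have E : forall (u v : seq F), all (in_Fp p) v ->
    (linp p u).[(linp p v).[y]] =
    \sum_(i < size u) \sum_(j < size v) u`_i * v`_j * y ^+ (p ^ i * p ^ j).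
  move=> u v hv; rewrite linpE; apply: eq_bigr => i _.
  rewrite linp_frob // linpE mulr_sumr; apply: eq_bigr => j _.
  by rewrite -exprM mulrA mulnC.
rewrite !E // exchange_big; apply: eq_bigr => j _; apply: eq_bigr => i _.
by rewrite mulnC (mulrC c`_i).
Qed.



Lemma pow_period (x : F) n e : x ^+ (p ^ n) = x -> x ^+ (p ^ (n * e)) = x.
Proof.
move=> h; elim: e => [|e IH]; first by rewrite muln0 expn0 expr1.
by rewrite mulnS expnD mulnC exprM IH h.
Qed.

Lemma pow_mod (x : F) n e : x ^+ (p ^ n) = x -> x ^+ (p ^ e) = x ^+ (p ^ (e %% n)).
Proof.
by move=> h; rewrite {1}(divn_eq e n) expnD exprM (mulnC _ n) pow_period.
Qed.

Lemma Tr_fix N d (x : F) : x ^+ (p ^ (N * d)) = x ->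
  (\sum_(i < N) x ^+ (p ^ (d * i))) ^+ (p ^ d) = \sum_(i < N) x ^+ (p ^ (d * i)).
Proof.
move=> h; rewrite frob_sum.
have E : forall i, (x ^+ (p ^ (d * i))) ^+ (p ^ d) = x ^+ (p ^ (d * i.+1)).
  by move=> i; rewrite -exprM -expnD mulnS addnC.
under eq_bigr do rewrite E.
case: N h => [|N] h; first by rewrite !big_ord0.
rewrite big_ord_recr big_ord_recl /= mulnC h muln0 expn0 expr1 addrC.
by congr (_ + _); apply: eq_bigr => i _.
Qed.

Lemma delta_pow (delta : F) n e : delta ^+ (p ^ n) = delta - 1 ->
  delta ^+ (p ^ (n * e)) = delta - e%:R.
Proof.
move=> h; elim: e => [|e IH]; first by rewrite muln0 expn0 expr1 subr0.
rewrite mulnS expnD mulnC exprM IH frobB (frob_fix _ (nat_fix _)) h.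
rewrite mulrSr; ring.
Qed.



Lemma Tr_perm N m d (a : F) : (0 < N)%N -> coprime m N -> a ^+ (p ^ (N * d)) = a ->
  \sum_(i < N) a ^+ (p ^ (m * d * i)) = \sum_(i < N) a ^+ (p ^ (d * i)).
Proof.
move=> N0 cop ha.
pose h := fun i : 'I_N => Ordinal (ltn_pmod (m * i) N0).
have hinj : injective h.
  move=> i j /(congr1 val) /= /eqP eq.
  apply: val_inj => /=.
  wlog le : i j eq / (i <= j)%N.
    move=> W; case: (leqP i j) => [|/ltnW] l; first exact: W.
    by symmetry; apply: W => //; rewrite eq_sym.
  have : (N %| m * j - m * i)%N by rewrite -eqn_mod_dvd ?leq_mul2l ?le ?orbT // eq_sym.
  rewrite -mulnBr Gauss_dvdr; last by rewrite coprime_sym.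
  have := ltn_ord j; have := ltn_ord i => hi hj dv.
  case: (posnP (j - i)) => [z|pz]; first lia.
  have := dvdn_leq pz dv; lia.
symmetry; rewrite (reindex_inj hinj) /=; apply: eq_bigr => i _.
by rewrite [in RHS](pow_mod _ ha) mulnAC -muln_modl mulnC.
Qed.

Section Core.
Variables (c c' : seq F) (m d : nat).
Hypotheses (hc : all (in_Fp p) c) (hc' : all (in_Fp p) c').
Hypothesis hcomp : 'X - 'X^(p ^ (m * d)) = linp p c \Po linp p c'.

Lemma comp_eval y : (linp p c).[(linp p c').[y]] = y - y ^+ (p ^ (m * d)).
Proof. by rewrite -horner_comp -hcomp hornerD hornerN hornerX hornerXn. Qed.

Lemma dir1 N x : x ^+ (p ^ (N * d)) = x ->
  (linp p c').[\sum_(i < N) ((linp p c).[x]) ^+ (p ^ (d * i))] = 0.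
Proof.
move=> hx; under eq_bigr do rewrite linp_frob //.
rewrite -linp_sum linp_comm // comp_eval (mulnC m d) pow_period ?subrr //.
exact: Tr_fix.
Qed.

Variables (N : nat) (a delta : F).
Hypotheses (N0 : (0 < N)%N) (cop : coprime m N) (m0 : (m%:R : F) != 0).
Hypotheses (ha : a ^+ (p ^ (N * d)) = a) (hd : delta ^+ (p ^ (N * d)) = delta - 1).

Let T := \sum_(i < N) (delta * a) ^+ (p ^ (m * d * i)).

Lemma T_diff : T - T ^+ (p ^ (m * d)) = m%:R * a.
Proof.
rewrite /T frob_sum.
have E : forall i, ((delta * a) ^+ (p ^ (m * d * i))) ^+ (p ^ (m * d))
   = (delta * a) ^+ (p ^ (m * d * i.+1)).
  by move=> i; rewrite -exprM -expnD mulnS addnC.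
under [X in _ - X]eq_bigr do rewrite E.
case: N N0 ha hd => [//|N'] _ ha' hd'.
rewrite [X in X - _]big_ord_recl [X in _ - X]big_ord_recr /= muln0 expn0 expr1.
idtac.
have -> : \sum_(i < N') (delta * a) ^+ (p ^ (m * d * bump 0 i)) =
          \sum_(i < N') (delta * a) ^+ (p ^ (m * d * i.+1)) by apply: eq_bigr.
have -> : (m * d * N'.+1 = N'.+1 * d * m)%N by rewrite mulnC mulnCA mulnC.
rewrite exprMn (pow_period _ ha') (delta_pow _ hd').
set S := \sum_(i < N') _.
by ring.
Qed.

Lemma x0_sol : (linp p c).[(m%:R)^-1 * (linp p c').[T]] = a.
Proof.
rewrite linp_scal; last by rewrite exprVn nat_fix.
by rewrite comp_eval T_diff mulKf.
Qed.

Lemma x0_fix : (linp p c').[\sum_(i < N) a ^+ (p ^ (d * i))] = 0 ->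
  ((m%:R)^-1 * (linp p c').[T]) ^+ (p ^ (N * d)) = (m%:R)^-1 * (linp p c').[T].
Proof.
move=> h0; rewrite exprMn frob_fix; last by rewrite exprVn nat_fix.
rewrite linp_frob //; congr (_ * _).
have -> : T ^+ (p ^ (N * d)) = T - \sum_(i < N) a ^+ (p ^ (m * d * i)).
  rewrite /T frob_sum -sumrB; apply: eq_bigr => i _.
  by rewrite exprAC exprMn hd ha mulrBl mul1r frobB.
by rewrite linpB Tr_perm // h0 subr0.
Qed.

End Core.
End Lin.

Unset Implicit Arguments.
Lemma delta_exists (F : closedFieldType) (q : nat) : (1 < q)%N ->
  exists delta : F, delta ^+ q = delta - 1.
Proof.
case: q => [//|[//|r]] _.
have [x hx] := @solve_monicpoly F r.+2 (nth 0 [:: -1; 1]) isT.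
exists x; rewrite hx big_ord_recl big_ord_recl big1 /= ?expr0 ?expr1 ?mulr1 ?mul1r ?addr0 1?addrC //.
by move=> i _; rewrite /= nth_nil mul0r.
Qed.

Theorem theorem2 (F : closedFieldType) (p n k : nat) (alpha alpha' : seq F) (a : F) :
  prime p -> p \in [pchar F] -> (0 < n)%N -> (0 < k)%N ->
  ~~ (p %| k %/ gcdn n k)%N ->
  all (in_Fp p) alpha -> all (in_Fp p) alpha' ->
  separable_poly (linp p alpha) ->
  'X - 'X^(p ^ k) = linp p alpha \Po linp p alpha' ->
  a ^+ (p ^ n) = a ->
  ((exists x : F, x ^+ (p ^ n) = x /\ (linp p alpha).[x] = a)
     <-> (linp p alpha').[Tr p (gcdn n k) n a] = 0)
  /\
  (forall delta : F, delta ^+ (p ^ (2 * n)) = delta -> Sr p n (2 * n) delta = 1 ->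
     let x0 := ((k %/ gcdn n k)%:R)^-1 * (linp p alpha').[Tr p k (lcmn n k) (delta * a)] in
     (linp p alpha).[x0] = a /\
     ((linp p alpha').[Tr p (gcdn n k) n a] = 0 -> x0 ^+ (p ^ n) = x0)).
Proof.
move=> pP hp n0 k0 ndvd hc hc' _ hcomp ha.
have hlcm0 : (lcmn n k * gcdn n k = n * k)%N by exact: muln_lcm_gcd.
rewrite /Tr.
set d := gcdn n k in ndvd hlcm0 *.
have d0 : (0 < d)%N by rewrite gcdn_gt0 n0.
have nE : n = (n %/ d * d)%N by rewrite divnK // dvdn_gcdl.
have kE : k = (k %/ d * d)%N by rewrite divnK // dvdn_gcdr.
have hg : gcdn n k = d by [].
set N := (n %/ d)%N in nE *.
set m := (k %/ d)%N in ndvd kE *.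
have N0 : (0 < N)%N by rewrite divn_gt0 // dvdn_leq // dvdn_gcdl.
have cop : coprime m N.
  move: hg; rewrite {1}nE {1}kE -muln_gcdl => /eqP.
  by rewrite -{2}(mul1n d) eqn_pmul2r // /coprime gcdnC.
have m0 : (m%:R : F) != 0 by rewrite -(dvdn_pcharf hp).
have hlcm : (lcmn n k %/ k = N)%N.
  have -> : lcmn n k = (N * k)%N.
    by apply/eqP; rewrite -(eqn_pmul2r d0) hlcm0 {1}nE mulnAC.
  by rewrite mulnK.
rewrite kE in hcomp; rewrite nE in ha.
have hp1 : (1 < p ^ n)%N by rewrite -(expn0 p) ltn_exp2l ?prime_gt1.
split.
  split.
    case=> x [hx <-]; rewrite nE in hx.
    exact: (dir1 hp hc hc' hcomp hx).
  move=> h0.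
  have [delta hd] := @delta_exists F _ hp1.
  rewrite nE in hd.
  exists ((m%:R)^-1 * (linp p alpha').[\sum_(i < N) (delta * a) ^+ (p ^ (m * d * i))]).
  split.
    by rewrite nE; apply: (x0_fix hp hc' N0 cop ha hd h0).
  exact: (x0_sol hp hcomp N0 m0 ha hd).
move=> delta _ hS.
have hd : delta ^+ (p ^ (N * d)) = delta - 1.
  move: hS; rewrite /Sr mulnK // big_ord_recr big_ord_recl big_ord0 /=.
  rewrite -nE muln0 muln1 expn0 expr1 => <-.
  by rewrite expr0 expr1; ring.
have E : \sum_(i < N) (delta * a) ^+ (p ^ (k * i)) =
    \sum_(i < N) (delta * a) ^+ (p ^ (m * d * i)) by rewrite -kE.
rewrite hlcm E; split.
  exact: (x0_sol hp hcomp N0 m0 ha hd).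
by move=> h0; rewrite nE; apply: (x0_fix hp hc' N0 cop ha hd h0).
Qed.
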